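(* There exists an NJ-symmetric ring $R$ such that the polynomial ring $R[x]$ is not NJ-symmetric.
   Context: Rings are associative with identity. $N(S)$ is the set of nilpotent elements, $J(S)$ the Jacobson radical of a ring $S$. $S$ is NJ-symmetric if for all $a,b,c\in S$, $abc\in N(S)$ implies $bac\in J(S)$. *)

(* Defs.v *)
From mathcomp Require Import all_boot all_order all_algebra.
Set Implicit Arguments. Unset Strict Implicit. Unset Printing Implicit Defensive.
Import GRing.Theory.
Local Open Scope ring_scope.

Definition nilpotent_elt (S : pzRingType) (a : S) : Prop :=
  exists n : nat, a ^+ n = 0.

Definition left_ideal (S : pzRingType) (I : S -> Prop) : Prop :=
  [/\ I 0,
      (forall x y, I x -> I y -> I (x + y)),
      (forall x, I x -> I (- x)) &
      (forall r x, I x -> I (r * x))].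

Definition maximal_left_ideal (S : pzRingType) (M : S -> Prop) : Prop :=
  [/\ left_ideal M, ~ M 1 &
      forall L : S -> Prop, left_ideal L -> ~ L 1 ->
        (forall x, M x -> L x) -> forall x, L x -> M x].

Definition jacobson (S : pzRingType) (a : S) : Prop :=
  forall M : S -> Prop, maximal_left_ideal M -> M a.

Definition NJ_symmetric (S : pzRingType) : Prop :=
  forall a b c : S, nilpotent_elt (a * b * c) -> jacobson (b * a * c).

(* Main.v *)
Require Import Defs.
From HB Require Import structures.
From mathcomp Require Import all_boot all_order all_algebra.
From mathcomp Require Import zify ring lra.
From Stdlib Require Import Classical.
Set Implicit Arguments. Unset Strict Implicit. Unset Printing Implicit Defensive.
Import GRing.Theory Num.Theory.
Local Open Scope ring_scope.


Definition Oq (q : rat) : bool := odd `|denq q|.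
Definition Tq (q : rat) : bool := odd `|denq q| && ~~ odd `|numq q|.
Definition Rep (q : rat) (n d : int) := odd `|d| /\ q * d%:~R = n%:~R.

Lemma repE q n d : Rep q n d -> numq q * d = n * denq q.
Proof.
case=> _ h; apply: (@intr_inj rat); rewrite !intrM numqE -h; ring.
Qed.

Lemma repO q n d : Rep q n d -> Oq q.
Proof.
move=> r; have e := repE r; case: r => od _.
have h : (`|denq q| %| `|numq q| * `|d|)%N.
  by rewrite -abszM e abszM dvdn_mull.
rewrite Gauss_dvdr in h; last by rewrite coprime_sym coprime_num_den.
exact: dvdn_odd h od.
Qed.

Lemma repT q n d : Rep q n d -> Tq q = ~~ odd `|n|.
Proof.
move=> r; have o := repO r; have e := repE r; case: r => od _.
move: o; rewrite /Oq /Tq => o; rewrite o /=.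
have := congr1 (fun x => odd (absz x)) e; rewrite /= !abszM !oddM od o.
by rewrite !andbT => ->.
Qed.

Lemma Orep q : Oq q -> Rep q (numq q) (denq q).
Proof. move=> o; split=> //; rewrite numqE. by []. Qed.

Lemma repD q r n d m e : Rep q n d -> Rep r m e -> Rep (q + r) (n * e + m * d) (d * e).
Proof.
case=> o1 h1 [o2 h2]; split; first by rewrite abszM oddM o1 o2.
rewrite intrD !intrM -h1 -h2; ring.
Qed.

Lemma repM q r n d m e : Rep q n d -> Rep r m e -> Rep (q * r) (n * m) (d * e).
Proof.
case=> o1 h1 [o2 h2]; split; first by rewrite abszM oddM o1 o2.
rewrite !intrM -h1 -h2; ring.
Qed.

Lemma repN q n d : Rep q n d -> Rep (- q) (- n) d.
Proof. case=> o1 h1; split=> //; rewrite intrN -h1; ring. Qed.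

Lemma repI (n : int) : Rep n%:~R n 1.
Proof. by split=> //; rewrite mulr1. Qed.

Lemma O0 : Oq 0. Proof. by []. Qed.
Lemma O1 : Oq 1. Proof. by []. Qed.
Lemma T0 : Tq 0. Proof. by []. Qed.
Lemma T1 : ~~ Tq 1. Proof. by []. Qed.

Lemma OD q r : Oq q -> Oq r -> Oq (q + r).
Proof. by move=> /Orep a /Orep b; apply: repO (repD a b). Qed.
Lemma OM q r : Oq q -> Oq r -> Oq (q * r).
Proof. by move=> /Orep a /Orep b; apply: repO (repM a b). Qed.
Lemma ON q : Oq q -> Oq (- q).
Proof. by move=> /Orep a; apply: repO (repN a). Qed.
Lemma OB q r : Oq q -> Oq r -> Oq (q - r).
Proof. by move=> a b; apply: OD => //; apply: ON. Qed.

Lemma TO q : Tq q -> Oq q.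
Proof. by case/andP. Qed.

Lemma TD q r : Tq q -> Tq r -> Tq (q + r).
Proof.
move=> a b; have /Orep ra := TO a; have /Orep rb := TO b.
move: a b; rewrite (repT ra) (repT rb) (repT (repD ra rb)).
case: ra rb => o1 _ [o2 _]; lia.
Qed.
Lemma TN q : Tq q -> Tq (- q).
Proof.
move=> a; have /Orep ra := TO a; move: a.
by rewrite (repT ra) (repT (repN ra)) abszN.
Qed.
Lemma TMl q r : Oq q -> Tq r -> Tq (q * r).
Proof.
move=> /Orep ra b; have /Orep rb := TO b; move: b.
rewrite (repT rb) (repT (repM ra rb)) abszM oddM => h; by rewrite negb_and h orbT.
Qed.
Lemma TMr q r : Tq q -> Oq r -> Tq (q * r).
Proof. by move=> a b; rewrite mulrC; apply: TMl. Qed.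
Lemma TMprime q r : Oq q -> Oq r -> Tq (q * r) = Tq q || Tq r.
Proof.
move=> /Orep ra /Orep rb.
by rewrite (repT ra) (repT rb) (repT (repM ra rb)) abszM oddM negb_and.
Qed.
Lemma TDr q t : Oq q -> Tq t -> Tq (q + t) = Tq q.
Proof.
move=> /Orep ra b; have /Orep rb := TO b; move: b.
rewrite (repT ra) (repT rb) (repT (repD ra rb)).
case: ra rb => o1 _ [o2 _]; lia.
Qed.
Lemma OV q : Oq q -> ~~ Tq q -> Oq q^-1 /\ q != 0.
Proof.
move=> o; move: (o); rewrite /Oq /Tq => o'; rewrite o' /= negbK => od.
have nz : numq q != 0 by apply: contraTneq od => ->.
have qnz : q != 0 by rewrite -numq_eq0.
split=> //; apply: (@repO _ (denq q) (numq q)); split=> //.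
have := numqE q; move=> h; rewrite h; field.
by [].
Qed.

Notation i0 := (@ord0 1).
Notation i1 := (@ord_max 1).
Lemma I2 (i : 'I_2) : i = i0 \/ i = i1.
Proof. case: i => [[|[|k]] h] //; [left|right]; exact: val_inj. Qed.

Lemma mul2E n (A : 'M[rat]_2) (B : 'M[rat]_(2, n)) i j : (A *m B) i j = A i i0 * B i0 j + A i i1 * B i1 j.
Proof.
rewrite mxE !big_ord_recl big_ord0 addr0.
by have -> : lift ord0 (@ord0 0) = i1 by apply: val_inj.
Qed.

Definition inR (A : 'M[rat]_2) : bool :=
  [&& Oq (A i0 i0), Oq (A i0 i1), Tq (A i1 i0) & Oq (A i1 i1)].

Lemma Rpred_subring : GRing.subring_closed inR.
Proof.
split.
- rewrite unfold_in /inR !mxE.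
  have -> : (i0 == i1) = false by [].
  have -> : (i1 == i0) = false by [].
  by rewrite !eqxx.
- move=> A B /and4P[a1 a2 a3 a4] /and4P[b1 b2 b3 b4].
  rewrite unfold_in /inR !mxE; apply/and4P; split; try apply: OB => //.
  by apply: TD => //; apply: TN.
- move=> A B /and4P[a1 a2 a3 a4] /and4P[b1 b2 b3 b4].
  rewrite unfold_in /inR -mulmxE !mul2E; apply/and4P; split.
  + by apply: OD; [apply: OM | apply: TO; apply: TMl].
  + by apply: OD; apply: OM.
  + by apply: TD; [apply: TMr | apply: TMl].
  + by apply: OD; [apply: TO; apply: TMr | apply: OM].
Qed.

HB.instance Definition _ := GRing.isSubringClosed.Build _ inR Rpred_subring.

Record Rt := RT { rval : 'M[rat]_2; rvalP : inR rval }.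
HB.instance Definition _ := [isSub for rval].
HB.instance Definition _ := [Choice of Rt by <:].
HB.instance Definition _ := [SubChoice_isSubNzRing of Rt by <:].


Lemma e01 : (i0 == i1) = false. Proof. by []. Qed.
Lemma e10 : (i1 == i0) = false. Proof. by []. Qed.

Lemma Rent (A : Rt) : [/\ Oq (val A i0 i0), Oq (val A i0 i1), Tq (val A i1 i0) & Oq (val A i1 i1)].
Proof. by case: A => /= a /and4P. Qed.

Lemma valM (A B : Rt) i j : val (A * B) i j = val A i i0 * val B i0 j + val A i i1 * val B i1 j.
Proof. by rewrite rmorphM /= -mulmxE mul2E. Qed.

Lemma diag0 (A B : Rt) : Tq (val (A * B) i0 i0) = Tq (val A i0 i0) || Tq (val B i0 i0).
Proof.
case: (Rent A) => a1 a2 a3 a4; case: (Rent B) => b1 b2 b3 b4.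
rewrite valM TDr; first by rewrite TMprime.
  exact: OM.
exact: TMl.
Qed.

Lemma diag1 (A B : Rt) : Tq (val (A * B) i1 i1) = Tq (val A i1 i1) || Tq (val B i1 i1).
Proof.
case: (Rent A) => a1 a2 a3 a4; case: (Rent B) => b1 b2 b3 b4.
rewrite valM addrC TDr; first by rewrite TMprime.
  exact: OM.
exact: TMr.
Qed.

Lemma diagX0 (A : Rt) n : Tq (val (A ^+ n.+1) i0 i0) = Tq (val A i0 i0).
Proof. elim: n => [|n IH]; first by rewrite expr1. by rewrite exprS diag0 IH orbb. Qed.
Lemma diagX1 (A : Rt) n : Tq (val (A ^+ n.+1) i1 i1) = Tq (val A i1 i1).
Proof. elim: n => [|n IH]; first by rewrite expr1. by rewrite exprS diag1 IH orbb. Qed.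

Definition J0 (A : Rt) := Tq (val A i0 i0) && Tq (val A i1 i1).

Lemma J0_left (r j : Rt) : J0 j -> J0 (r * j).
Proof.
case/andP=> j1 j4; case: (Rent r) => r1 r2 r3 r4; case: (Rent j) => k1 k2 k3 k4.
rewrite /J0 !valM; apply/andP; split; apply: TD.
- exact: TMl.
- exact: TMl.
- exact: TMr.
- exact: TMl.
Qed.

Lemma unit_of (k : Rt) : J0 k -> exists v : Rt, v * (1 - k) = 1.
Proof.
case/andP=> k1 k4; case: (Rent k) => o1 o2 o3 o4.
set U := val (1 - k).
have U00 : U i0 i0 = 1 - val k i0 i0 by rewrite /U rmorphB rmorph1 !mxE.
have U11 : U i1 i1 = 1 - val k i1 i1 by rewrite /U rmorphB rmorph1 !mxE.
have U01 : U i0 i1 = - val k i0 i1 by rewrite /U rmorphB rmorph1 !mxE e01 sub0r.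
have U10 : U i1 i0 = - val k i1 i0 by rewrite /U rmorphB rmorph1 !mxE e10 sub0r.
have hU : rval (1 - k) = U by [].
clearbody U.
have OU00 : Oq (U i0 i0) by rewrite U00; apply: OB.
have OU11 : Oq (U i1 i1) by rewrite U11; apply: OB.
have OU01 : Oq (U i0 i1) by rewrite U01; apply: ON.
have TU10 : Tq (U i1 i0) by rewrite U10; apply: TN.
have nT00 : ~~ Tq (U i0 i0).
  by rewrite -(TDr OU00 k1) U00 subrK.
have nT11 : ~~ Tq (U i1 i1).
  by rewrite -(TDr OU11 k4) U11 subrK.
set det := U i0 i0 * U i1 i1 - U i0 i1 * U i1 i0.
have Odet : Oq det by apply: OB; apply: OM => //; apply: TO.
have nTdet : ~~ Tq det.
  rewrite /det TDr ?TMprime ?negb_or ?nT00 ?nT11 //; first by apply: OM.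
  by apply: TN; apply: TMl.
have [Oi dnz] := OV Odet nTdet.
pose V := \matrix_(i, j) (det^-1 * (if i == i0 then (if j == i0 then U i1 i1 else - U i0 i1)
                                      else (if j == i0 then - U i1 i0 else U i0 i0))).
have VR : inR V.
  rewrite /inR !mxE /=; apply/and4P; split.
  - exact: OM.
  - by apply: OM => //; apply: ON.
  - by apply: TMl => //; apply: TN.
  - exact: OM.
exists (RT VR); apply: val_inj; rewrite rmorphM rmorph1.
change (V * rval (1 - k) = 1); rewrite hU -mulmxE.
apply/matrixP => i j; rewrite mul2E !mxE.
case: (I2 i) => ->; case: (I2 j) => ->; rewrite ?eqxx ?e01 ?e10 /=;
  move: dnz; rewrite /det => dnz; field => //.
Qed.

Lemma M_J0 (M : Rt -> Prop) : maximal_left_ideal M -> forall j, J0 j -> M j.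
Proof.
case=> [[M0 MD MN MM] M1 Mmax] j Jj.
pose L y := exists m r, M m /\ y = m + r * j.
have Lid : left_ideal L.
  split.
  - by exists 0, 0; rewrite mul0r addr0.
  - move=> x y [m1 [r1 [h1 ->]]] [m2 [r2 [h2 ->]]]; exists (m1 + m2), (r1 + r2).
    split; [exact: MD | by rewrite mulrDl addrACA].
  - move=> x [m1 [r1 [h1 ->]]]; exists (- m1), (- r1); split; [exact: MN | by rewrite mulNr opprD].
  - move=> s x [m1 [r1 [h1 ->]]]; exists (s * m1), (s * r1); split; [exact: MM | rewrite mulrDr mulrA //].
case: (classic (L 1)) => [[m [r [hm e]]]|nL1].
  have hm' : m = 1 - r * j by rewrite e addrK.
  have [v hv] := unit_of (J0_left r Jj).
  by exfalso; apply: M1; rewrite -hv -hm'; apply: MM.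
apply: (Mmax L Lid nL1).
  by move=> x hx; exists x, 0; rewrite mul0r addr0.
by exists 0, 1; rewrite mul1r add0r.
Qed.

Lemma NJ_Rt : NJ_symmetric Rt.
Proof.
move=> a b c [n hn] M hM; apply: M_J0 => //.
case: n hn => [|n] hn.
  by exfalso; move: hn; rewrite expr0 => /eqP; rewrite oner_eq0.
have := diagX0 (a * b * c) n; have := diagX1 (a * b * c) n.
rewrite !diag0 !diag1 hn rmorph0 !mxE T0 /J0 !diag0 !diag1.
case: (Tq (val a i0 i0)); case: (Tq (val b i0 i0)); case: (Tq (val c i0 i0));
case: (Tq (val a i1 i1)); case: (Tq (val b i1 i1)); case: (Tq (val c i1 i1)) => //.
Qed.


Lemma two_adic_nat (N : nat) : (0 < N)%N -> exists k m, odd m /\ N = (2 ^ k * m)%N.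
Proof.
elim: N {-2}N (leqnn N) => [|B IH] N hN N0; first by lia.
case oN: (odd N); first by exists 0%N, N; rewrite expn0 mul1n.
have e : N = (2 * N./2)%N by rewrite -[LHS]odd_double_half oN add0n -mul2n.
have h1 : (N./2 <= B)%N by lia.
have h2 : (0 < N./2)%N by lia.
have [k [m [om em]]] := IH N./2 h1 h2.
by exists k.+1, m; split => //; rewrite e em expnS mulnA.
Qed.

Lemma two_adic_int (n : int) : n != 0 -> exists k (m : int), odd `|m| /\ n = (2 ^ k)%:Z * m.
Proof.
move=> nz; have h0 : (0 < `|n|)%N by lia.
have [k [m [om em]]] := two_adic_nat h0.
exists k, (if (n < 0)%R then - m%:Z else m%:Z); split; first by case: ifP => _; lia.
case: ifP => h; lia.
Qed.

Lemma two_inv (q : rat) : q != 0 -> exists k s, Oq s /\ s * (2^-1) ^+ k * q = 1.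
Proof.
move=> qnz; have nz : numq q != 0 by rewrite numq_eq0.
have [k [m [om em]]] := two_adic_int nz.
exists k, ((2 ^ k)%:R * q^-1); split.
  apply: (@repO _ (denq q) m); split=> //.
  have H := numqE q; rewrite em intrM in H.
  have Hd : ((denq q)%:~R : rat) = q^-1 * (((2 ^ k)%:Z)%:~R * m%:~R) by rewrite H mulKf.
  rewrite Hd; rewrite [((2 ^ k)%:Z)%:~R]/=; field.
  exact: qnz.
rewrite natrX exprVn; field; rewrite qnz /=; apply/andP; split => //; apply: expf_neq0; by [].
Qed.


Definition hh : 'M[rat]_2 := (2^-1 : rat)%:M.
Lemma cfu : commr_rmorph (val : {rmorphism Rt -> 'M[rat]_2}) hh.
Proof. by move=> x; rewrite /GRing.comm /hh -!mulmxE scalar_mxC. Qed.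
Notation phi := (horner_morph cfu).
Definition e1 : 'M[rat]_(2, 1) := delta_mx i0 ord0.
Definition Mx (f : {poly Rt}) : Prop := phi f *m e1 = 0.

Lemma phiCX (c : Rt) k : phi (c%:P * 'X^k) = ((2^-1) ^+ k) *: val c.
Proof.
rewrite rmorphM.
change (horner_morph cfu c%:P * horner_morph cfu ('X^k) = (2^-1) ^+ k *: val c).
rewrite horner_morphC.
have -> : horner_morph cfu 'X^k = hh ^+ k by rewrite /horner_morph map_polyXn hornerXn.
rewrite /hh.
have -> : ((2^-1 : rat)%:M : 'M[rat]_2) ^+ k = ((2^-1) ^+ k)%:M.
  elim: k => [|k IH]; first by rewrite !expr0.
  by rewrite !exprS IH -mulmxE -scalar_mxM.
by rewrite -mulmxE mul_mx_scalar.
Qed.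

Lemma phiC (c : Rt) : phi c%:P = val c.
Proof. exact: horner_morphC. Qed.

Lemma Mx_max : maximal_left_ideal Mx.
Proof.
split.
- split.
  + by rewrite /Mx rmorph0 mul0mx.
  + by move=> x y hx hy; rewrite /Mx rmorphD mulmxDl hx hy addr0.
  + by move=> x hx; rewrite /Mx rmorphN mulNmx hx oppr0.
  + by move=> r x hx; rewrite /Mx rmorphM -mulmxE -mulmxA hx mulmx0.
- rewrite /Mx rmorph1 mul1mx => /matrixP /(_ i0 ord0); rewrite !mxE !eqxx /=.
  by move/eqP; rewrite oner_eq0.
move=> L [L0 LD LN LM] nL1 sub f Lf.
apply: NNPP => nM.
set v := phi f *m e1.
have hv : phi f *m e1 = v by [].
clearbody v.
suff [g hg] : exists g, phi g *m v = e1.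
  apply: nL1.
  have h : Mx (1 - g * f).
    by rewrite /Mx rmorphB rmorph1 rmorphM mulmxBl mul1mx -mulmxE -mulmxA hv hg subrr.
  have -> : 1 = (1 - g * f) + g * f by rewrite subrK.
  by apply: LD; [apply: sub | apply: LM].
have [u0|u0] := eqVneq (v i0 ord0) 0.
  have w0 : v i1 ord0 != 0.
    apply/negP => /eqP w0; apply: nM; rewrite /Mx hv; apply/matrixP => i j.
    rewrite (ord1 j) [RHS]mxE; case: (I2 i) => ->; [exact: u0 | exact: w0].
  have [k [s [Os hs]]] := two_inv w0.
  have SR : inR (s *: delta_mx i0 i1).
    by rewrite /inR !mxE /= mulr1 !mulr0 Os.
  exists ((RT SR)%:P * 'X^k); rewrite phiCX /=.
  apply/matrixP => i j; rewrite (ord1 j) mul2E !mxE.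
  case: (I2 i) => -> /=; rewrite ?u0 //=.
  - by rewrite !mulr0 ?mul0r add0r mulr1 [_ ^+ k * s]mulrC hs.
  - by rewrite !mulr0 ?mul0r ?addr0.
have [k [s [Os hs]]] := two_inv u0.
have SR : inR (s *: delta_mx i0 i0).
  by rewrite /inR !mxE /= mulr1 !mulr0 Os.
exists ((RT SR)%:P * 'X^k); rewrite phiCX /=.
apply/matrixP => i j; rewrite (ord1 j) mul2E !mxE.
case: (I2 i) => -> /=.
- by rewrite !mulr0 ?mul0r addr0 mulr1 [_ ^+ k * s]mulrC hs.
- by rewrite !mulr0 ?mul0r ?addr0.
Qed.


Lemma aR : inR (delta_mx i1 i1). Proof. by rewrite /inR !mxE. Qed.
Lemma bR : inR (delta_mx i0 i1). Proof. by rewrite /inR !mxE. Qed.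
Lemma cR : inR (2 *: delta_mx i1 i0). Proof. by rewrite /inR !mxE /= ?mulr0 ?mulr1. Qed.

Theorem theorem2p29 :
  exists R : nzRingType, NJ_symmetric R /\ ~ NJ_symmetric {poly R}.
Proof.
exists Rt; split; first exact: NJ_Rt.
move=> H.
pose a : Rt := RT aR. pose b : Rt := RT bR. pose c : Rt := RT cR.
have abc0 : a * b * c = 0.
  apply: val_inj; rewrite !rmorphM rmorph0 /= -!mulmxE.
  apply/matrixP => i j; rewrite !mul2E !mxE.
  by case: (I2 i) => ->; case: (I2 j) => -> /=; rewrite !mulr0 ?mul0r ?addr0.
have bac : val (b * a * c) = 2 *: delta_mx i0 i0.
  rewrite !rmorphM /= -!mulmxE.
  apply/matrixP => i j; rewrite !mul2E !mxE.
  by case: (I2 i) => ->; case: (I2 j) => -> /=; rewrite ?mulr0 ?mul0r ?addr0 ?add0r ?mulr1.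
have hn : nilpotent_elt (0%:P : {poly Rt}) by exists 1%N; rewrite expr1.
have := H a%:P b%:P c%:P.
rewrite -!polyCM abc0 => /(_ hn) /(_ Mx Mx_max).
rewrite /Mx phiC bac => /matrixP /(_ i0 ord0).
rewrite mul2E !mxE /= ?mulr0 ?mulr1 ?addr0.
done.
Qed.
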